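(* Let $\mathcal{C}$ be the Cesàro operator $\mathcal{C}(x)=\big(\frac1n\sum_{i=1}^n x_i\big)_n$. Fix $1\le p<\infty$ and $1<q,r<\infty$, and let $T\colon\ell^p\to\ell^q$ be a nontrivial continuous linear operator with matrix $a_{ij}=T(e^j)_i$. Let $h=(h_j)\in\ell^{s_{pr}}$, and write $s=s_{rq}$ and $s'$ for its conjugate exponent. The following are equivalent: (a) There exists $g\in\ell^{s}$ such that $T(x)=g\,\mathcal{C}(hx)$ for all $x\in\ell^p$ (here $\mathcal{C}\colon\ell^r\to\ell^r$). (b) There exists $g=(g_i)\in\ell^{s}$ such that $a_{ij}=g_ih_j/i$ if $j\le i$ and $a_{ij}=0$ if $j>i$. (c) There exists $C>0$ such that $$\sum_{i=1}^n\sum_{j=1}^m r_{ij}a_{ij}\le C\Big(\sum_{i=1}^n\frac{1}{i^{s'}}\Big|\sum_{j=1}^{\min\{i,m\}}h_jr_{ij}\Big|^{s'}\Big)^{1/s'}$$ for all $n,m\in\mathbb{N}$ and all real $(r_{ij})$ with $|r_{ij}|\le1$. Moreover, if $r\le q$, then (a)–(c) are equivalent to: (d) There exists $C>0$ such that $\sum_{j=1}^m r_ja_{nj}\le C\frac1n\big|\sum_{j=1}^{\min\{n,m\}}h_jr_j\big|$ for all $n,m\in\mathbb{N}$ and all real $(r_j)$ with $|r_j|\le1$.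
   Context: $(e^n)$ denotes the standard unit vectors. For exponents $1\le a,b\le\infty$, $s_{ab}=\frac{ab}{a-b}$ if $1\le b<a<\infty$; $s_{ab}=b$ if $1\le b<a=\infty$; $s_{ab}=\infty$ if $1\le a\le b\le\infty$. Products of sequences are coordinatewise. $\mathcal{C}$ is bounded on $\ell^r$ for $1<r<\infty$. *)

(* Defs.v *)
From Stdlib Require Import Reals Lra.
From Coquelicot Require Import Coquelicot.
Open Scope R_scope.

(* Convention: sequences are nat -> R, index k stands for the paper's index k+1. *)

(* x^y for x >= 0, y > 0, with 0^y = 0 (Stdlib's Rpower 0 y = 1). *)
Definition pw (x y : R) : R := if Req_EM_T x 0 then 0 else Rpower x y.

Fixpoint sumto (n : nat) (f : nat -> R) : R :=
  match n with O => 0 | S k => sumto k f + f k end.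

Definition in_lp (p : Rbar) (x : nat -> R) : Prop :=
  match p with
  | Finite p0 => ex_series (fun n => pw (Rabs (x n)) p0)
  | p_infty => exists M, forall n, Rabs (x n) <= M
  | m_infty => False
  end.

Definition lp_norm (p : R) (x : nat -> R) : R :=
  pw (Series (fun n => pw (Rabs (x n)) p)) (1 / p).

Definition s_exp (a b : R) : Rbar :=
  if Rlt_dec b a then Finite (a * b / (a - b)) else p_infty.

Definition conj_exp (s : Rbar) : R :=
  match s with
  | Finite s0 => s0 / (s0 - 1)
  | _ => 1
  end.

Definition unitv (j : nat) : nat -> R := fun k => if Nat.eqb k j then 1 else 0.

Definition cesaro (x : nat -> R) : nat -> R :=
  fun n => sumto (S n) x / INR (S n).

Definition bounded_linear_op (p q : R) (T : (nat -> R) -> (nat -> R)) : Prop :=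
  (forall x, in_lp (Finite p) x -> in_lp (Finite q) (T x)) /\
  (forall x y, in_lp (Finite p) x -> in_lp (Finite p) y ->
     forall n, T (fun k => x k + y k) n = T x n + T y n) /\
  (forall c x, in_lp (Finite p) x -> forall n, T (fun k => c * x k) n = c * T x n) /\
  (exists M, forall x, in_lp (Finite p) x -> lp_norm q (T x) <= M * lp_norm p x).

Definition nontrivial_op (p : R) (T : (nat -> R) -> (nat -> R)) : Prop :=
  exists x, in_lp (Finite p) x /\ exists n, T x n <> 0.

(* Main.v *)
Require Import Defs.
From Stdlib Require Import Reals Lra Lia FunctionalExtensionality.
From Coquelicot Require Import Coquelicot.
Open Scope R_scope.

Lemma sumto_ext n f g : (forall k, (k < n)%nat -> f k = g k) -> sumto n f = sumto n g.
Proof. induction n; simpl; intros H; auto. rewrite IHn by (intros; apply H; lia). rewrite H by lia. auto. Qed.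

Lemma sumto_plus n f g : sumto n (fun k => f k + g k) = sumto n f + sumto n g.
Proof. induction n; simpl; [lra|]. rewrite IHn; ring. Qed.

Lemma sumto_scal n c f : sumto n (fun k => c * f k) = c * sumto n f.
Proof. induction n; simpl; [ring|]. rewrite IHn; ring. Qed.

Lemma sumto_zero n f : (forall k, (k < n)%nat -> f k = 0) -> sumto n f = 0.
Proof. induction n; simpl; intros H; auto. rewrite IHn by (intros; apply H; lia). rewrite H by lia. ring. Qed.

Lemma sumto_le n f g : (forall k, (k < n)%nat -> f k <= g k) -> sumto n f <= sumto n g.
Proof. induction n; simpl; intros H; [lra|]. assert (sumto n f <= sumto n g) by (apply IHn; intros; apply H; lia).
 assert (f n <= g n) by (apply H; lia). lra. Qed.

Lemma sumto_nonneg n f : (forall k, (k < n)%nat -> 0 <= f k) -> 0 <= sumto n f.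
Proof. intros H. replace 0 with (sumto n (fun _ => 0)). apply sumto_le; auto. apply sumto_zero; auto. Qed.

Lemma sumto_term n f i : (forall k, (k < n)%nat -> 0 <= f k) -> (i < n)%nat -> f i <= sumto n f.
Proof. induction n; simpl; intros H Hi; [lia|].
 assert (0 <= sumto n f) by (apply sumto_nonneg; intros; apply H; lia).
 destruct (Nat.eq_dec i n). subst. lra.
 assert (f i <= sumto n f) by (apply IHn; [intros; apply H; lia| lia]).
 assert (0 <= f n) by (apply H; lia). lra. Qed.

Lemma sumto_single n f i : (forall k, (k < n)%nat -> k <> i -> f k = 0) -> (i < n)%nat -> sumto n f = f i.
Proof. induction n; simpl; intros H Hi; [lia|].
 destruct (Nat.eq_dec i n). subst. rewrite sumto_zero. ring. intros; apply H; lia.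
 rewrite IHn; [ | intros; apply H; lia | lia]. rewrite (H n) by lia. ring. Qed.

Lemma sumto_unit_l m j f : (j < m)%nat -> sumto m (fun k => unitv j k * f k) = f j.
Proof. intros H. rewrite (sumto_single _ _ j); auto. unfold unitv; rewrite Nat.eqb_refl; ring.
 intros k _ Hk. unfold unitv. apply Nat.eqb_neq in Hk. rewrite Hk. ring. Qed.

Lemma sumto_unit_r m j f : (j < m)%nat -> sumto m (fun k => f k * unitv j k) = f j.
Proof. intros H. rewrite <- (sumto_unit_l m j f H). apply sumto_ext; intros; ring. Qed.

Lemma sumto_unit_out m j f : (m <= j)%nat -> sumto m (fun k => f k * unitv j k) = 0.
Proof. intros H; apply sumto_zero; intros k Hk. unfold unitv.
 assert (Nat.eqb k j = false) by (apply Nat.eqb_neq; lia). rewrite H0; ring. Qed.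

Lemma sumto_trunc m i f : sumto m (fun j => if Nat.leb j i then f j else 0) = sumto (Nat.min (S i) m) f.
Proof. induction m. replace (Nat.min (S i) 0) with 0%nat by lia. reflexivity.
 cbn [sumto]. rewrite IHm. destruct (Nat.leb m i) eqn:E.
 - apply Nat.leb_le in E. replace (Nat.min (S i) (S m)) with (S m) by lia.
   replace (Nat.min (S i) m) with m by lia. reflexivity.
 - apply Nat.leb_gt in E. replace (Nat.min (S i) (S m)) with (Nat.min (S i) m) by lia. ring. Qed.

Lemma sumto_sum_f n f : sumto (S n) f = sum_f_R0 f n.
Proof. induction n; simpl; [ring|]. simpl in IHn. rewrite <- IHn. simpl. ring. Qed.

Lemma sumto_abs n f : Rabs (sumto n f) <= sumto n (fun k => Rabs (f k)).
Proof. induction n; simpl. rewrite Rabs_R0; lra.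
 eapply Rle_trans. apply Rabs_triang. lra. Qed.

Lemma pw_0 a : pw 0 a = 0.
Proof. unfold pw. destruct (Req_EM_T 0 0); auto; lra. Qed.

Lemma pw_pos x a : 0 < x -> pw x a = Rpower x a.
Proof. intros. unfold pw. destruct (Req_EM_T x 0); auto; lra. Qed.

Lemma pw_ge0 x a : 0 <= pw x a.
Proof. unfold pw. destruct (Req_EM_T x 0). lra. unfold Rpower. left; apply exp_pos. Qed.

Lemma pw_gt0 x a : 0 < x -> 0 < pw x a.
Proof. intros. rewrite pw_pos by auto. unfold Rpower. apply exp_pos. Qed.

Lemma pw_eq0 x a : 0 <= x -> pw x a = 0 -> x = 0.
Proof. intros H1 H2. destruct (Req_EM_T x 0); auto. assert (0 < pw x a) by (apply pw_gt0; lra). lra. Qed.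

Lemma pw_1 x : 0 <= x -> pw x 1 = x.
Proof. intros. destruct (Req_EM_T x 0). subst; apply pw_0. rewrite pw_pos by lra. apply Rpower_1; lra. Qed.

Lemma pw_pw x a b : 0 <= x -> pw (pw x a) b = pw x (a * b).
Proof. intros. destruct (Req_EM_T x 0). subst; rewrite !pw_0; auto.
 assert (0 < x) by lra. rewrite (pw_pos x) by auto. rewrite pw_pos. rewrite pw_pos by auto. apply Rpower_mult.
 unfold Rpower; apply exp_pos. Qed.

Lemma pw_inv_pw x a : 0 <= x -> a <> 0 -> pw (pw x a) (1 / a) = x.
Proof. intros. rewrite pw_pw by auto. replace (a * (1 / a)) with 1 by (field; auto). apply pw_1; auto. Qed.

Lemma pw_mul x y a : 0 <= x -> 0 <= y -> pw (x * y) a = pw x a * pw y a.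
Proof. intros. destruct (Req_EM_T x 0). subst; rewrite Rmult_0_l, !pw_0; ring.
 destruct (Req_EM_T y 0). subst; rewrite Rmult_0_r, !pw_0; ring.
 rewrite !pw_pos by nra. rewrite Rpower_mult_distr; auto; lra. Qed.

Lemma pw_plus x a b : pw x (a + b) = pw x a * pw x b.
Proof. unfold pw. destruct (Req_EM_T x 0). ring. apply Rpower_plus. Qed.

Lemma pw_invx x a : 0 < x -> pw (/ x) a = / pw x a.
Proof. intros. rewrite !pw_pos; auto. 2: apply Rinv_0_lt_compat; auto.
 unfold Rpower. rewrite ln_Rinv by auto. rewrite <- exp_Ropp. f_equal; ring. Qed.

Lemma pw_div x y a : 0 < x -> 0 <= y -> / pw x a * pw y a = pw (y / x) a.
Proof. intros. unfold Rdiv. rewrite pw_mul; auto. rewrite pw_invx; auto. ring.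
 left; apply Rinv_0_lt_compat; auto. Qed.

Lemma pw_le x y a : 0 < a -> 0 <= x <= y -> pw x a <= pw y a.
Proof. intros. destruct (Req_EM_T x 0). subst; rewrite pw_0; apply pw_ge0.
 rewrite !pw_pos by lra. apply Rle_Rpower_l; lra. Qed.

Lemma pw_lt x y a : 0 < a -> 0 <= x < y -> pw x a < pw y a.
Proof. intros. destruct (Req_EM_T x 0). subst; rewrite pw_0; apply pw_gt0; lra.
 rewrite !pw_pos by lra. apply Rlt_Rpower_l; lra. Qed.

Lemma pw_le_inv x y a : 0 < a -> 0 <= x -> 0 <= y -> pw x a <= pw y a -> x <= y.
Proof. intros. destruct (Rle_lt_dec x y); auto. assert (pw y a < pw x a) by (apply pw_lt; lra). lra. Qed.

Lemma young u v al be : 0 < al -> 0 < be -> al + be = 1 -> 0 <= u -> 0 <= v ->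
  pw u al * pw v be <= al * u + be * v.
Proof. intros Ha Hb Hab Hu Hv.
 destruct (Req_EM_T u 0). subst; rewrite pw_0; nra.
 destruct (Req_EM_T v 0). subst; rewrite pw_0; nra.
 assert (u > 0) by lra. assert (v > 0) by lra.
 rewrite !pw_pos by auto. unfold Rpower.
 rewrite <- exp_plus. set (L := al * ln u + be * ln v).
 assert (E1 : u = exp L * exp (ln u - L)) by (rewrite <- exp_plus; replace (L + (ln u - L)) with (ln u) by ring; rewrite exp_ln; auto).
 assert (E2 : v = exp L * exp (ln v - L)) by (rewrite <- exp_plus; replace (L + (ln v - L)) with (ln v) by ring; rewrite exp_ln; auto).
 pose proof (exp_ineq1_le (ln u - L)). pose proof (exp_ineq1_le (ln v - L)).
 pose proof (exp_pos L).
 assert (P1 : exp L * (1 + (ln u - L)) <= exp L * exp (ln u - L)) by (apply Rmult_le_compat_l; lra).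
 assert (P2 : exp L * (1 + (ln v - L)) <= exp L * exp (ln v - L)) by (apply Rmult_le_compat_l; lra).
 rewrite <- E1 in P1. rewrite <- E2 in P2.
 assert (Q : al * (1 + (ln u - L)) + be * (1 + (ln v - L)) = 1).
 { unfold L. replace be with (1 - al) by lra. ring. }
 change (exp L <= al * u + be * v).
 assert (al * (exp L * (1 + (ln u - L))) <= al * u) by (apply Rmult_le_compat_l; lra).
 assert (be * (exp L * (1 + (ln v - L))) <= be * v) by (apply Rmult_le_compat_l; lra).
 assert (exp L = al * (exp L * (1 + (ln u - L))) + be * (exp L * (1 + (ln v - L)))).
 { transitivity (exp L * (al * (1 + (ln u - L)) + be * (1 + (ln v - L)))). rewrite Q; ring. ring. }
 lra. Qed.

Lemma holder n u v al be : 0 < al -> 0 < be -> al + be = 1 ->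
  (forall k, 0 <= u k) -> (forall k, 0 <= v k) ->
  sumto n (fun k => pw (u k) al * pw (v k) be) <= pw (sumto n u) al * pw (sumto n v) be.
Proof. intros Ha Hb Hab Hu Hv.
 assert (U0 : 0 <= sumto n u) by (apply sumto_nonneg; auto).
 assert (V0 : 0 <= sumto n v) by (apply sumto_nonneg; auto).
 destruct (Req_EM_T (sumto n u) 0) as [E|E].
 { rewrite sumto_zero. rewrite E, pw_0; lra. intros k Hk.
   assert (u k = 0). { pose proof (sumto_term n u k (fun k _ => Hu k) Hk). pose proof (Hu k). lra. }
   rewrite H, pw_0; ring. }
 destruct (Req_EM_T (sumto n v) 0) as [F|F].
 { rewrite sumto_zero. rewrite F, pw_0; lra. intros k Hk.
   assert (v k = 0). { pose proof (sumto_term n v k (fun k _ => Hv k) Hk). pose proof (Hv k). lra. }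
   rewrite H, pw_0; ring. }
 set (U := sumto n u) in *. set (V := sumto n v) in *.
 assert (0 < U) by lra. assert (0 < V) by lra.
 set (K := pw U al * pw V be).
 assert (0 <= K) by (unfold K; pose proof (pw_ge0 U al); pose proof (pw_ge0 V be); nra).
 apply Rle_trans with (sumto n (fun k => K * (al * (u k / U) + be * (v k / V)))).
 - apply sumto_le; intros k _.
   replace (u k) with (U * (u k / U)) at 1 by (field; lra).
   replace (v k) with (V * (v k / V)) at 1 by (field; lra).
   rewrite !pw_mul; try lra. 2,3: unfold Rdiv; apply Rmult_le_pos; [auto| left; apply Rinv_0_lt_compat; lra].
   pose proof (young (u k / U) (v k / V) al be Ha Hb Hab).
   assert (0 <= u k / U) by (unfold Rdiv; apply Rmult_le_pos; [auto| left; apply Rinv_0_lt_compat; lra]).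
   assert (0 <= v k / V) by (unfold Rdiv; apply Rmult_le_pos; [auto| left; apply Rinv_0_lt_compat; lra]).
   specialize (H2 H3 H4). unfold K. 
   replace (pw U al * pw (u k / U) al * (pw V be * pw (v k / V) be)) with ((pw U al * pw V be) * (pw (u k / U) al * pw (v k / V) be)) by ring.
   apply Rmult_le_compat_l; auto.
 - rewrite sumto_scal, sumto_plus.
   replace (sumto n (fun k => al * (u k / U))) with (al / U * U).
   replace (sumto n (fun k => be * (v k / V))) with (be / V * V).
   replace (al / U * U + be / V * V) with 1 by (field_simplify; lra). lra.
   transitivity (sumto n (fun k => (be / V) * v k)). rewrite sumto_scal; reflexivity. apply sumto_ext; intros; field; lra.
   transitivity (sumto n (fun k => (al / U) * u k)). rewrite sumto_scal; reflexivity. apply sumto_ext; intros; field; lra.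
Qed.

Lemma ex_series_0 : ex_series (fun _ : nat => 0).
Proof. apply ex_series_Reals_1. exists 0. intros e He. exists 0%nat. intros n _.
 rewrite sum_cte. unfold R_dist. rewrite Rmult_0_l, Rminus_0_r, Rabs_R0. auto. Qed.

Lemma ex_series_fin (f : nat -> R) N : (forall k, (N <= k)%nat -> f k = 0) -> ex_series f.
Proof. intros H. apply (ex_series_incr_n f N). apply (ex_series_ext (fun _ => 0)).
 intros; rewrite H; auto; lia. apply ex_series_0. Qed.

Lemma in_lp_fin p (y : nat -> R) N : (forall k, (N <= k)%nat -> y k = 0) -> in_lp (Finite p) y.
Proof. intros H. simpl. apply (ex_series_fin _ N). intros k Hk. rewrite H by auto. rewrite Rabs_R0. apply pw_0. Qed.

Lemma in_lp_dom p (x y : nat -> R) : in_lp (Finite p) x -> (forall k, y k = x k \/ y k = 0) -> in_lp (Finite p) y.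
Proof. simpl. intros H1 H2. apply (@ex_series_le R_AbsRing R_CompleteNormedModule _ (fun n => pw (Rabs (x n)) p)); auto.
 intros n. change norm with Rabs. rewrite Rabs_pos_eq by apply pw_ge0.
 destruct (H2 n) as [E|E]; rewrite E. lra. rewrite Rabs_R0, pw_0. apply pw_ge0. Qed.

Lemma Series_nonneg (u : nat -> R) : ex_series u -> (forall k, 0 <= u k) -> 0 <= Series u.
Proof. intros H1 H2. replace 0 with (Series (fun _ => 0)). apply Series_le; auto. intros; split; auto; lra.
 apply is_series_unique. apply is_series_Reals. intros e He. exists 0%nat. intros n _.
 rewrite sum_cte. unfold R_dist. rewrite Rmult_0_l, Rminus_0_r, Rabs_R0. auto. Qed.

Lemma sumto_le_Series (u : nat -> R) N : ex_series u -> (forall k, 0 <= u k) -> sumto N u <= Series u.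
Proof. intros H1 H2. destruct N. simpl. apply Series_nonneg; auto.
 rewrite (Series_incr_n u (S N)) by (auto; lia). rewrite sumto_sum_f. simpl Init.Nat.pred.
 assert (0 <= Series (fun k => u (S N + k)%nat)). apply Series_nonneg; auto.
 apply (ex_series_incr_n u (S N)); auto. lra. Qed.

Lemma ex_series_bounded (u : nat -> R) B : (forall k, 0 <= u k) -> (forall N, sumto N u <= B) -> ex_series u.
Proof. intros H1 H2. apply ex_series_Reals_1. apply growing_cv.
 - intros n. simpl. pose proof (H1 (S n)). lra.
 - exists B. intros x [i ->]. rewrite <- sumto_sum_f. apply H2. Qed.

Definition tailv (N : nat) (x : nat -> R) : nat -> R := fun k => if Nat.ltb k N then 0 else x k.
Definition truncv (N : nat) (x : nat -> R) : nat -> R := fun k => if Nat.ltb k N then x k else 0.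

Lemma tail_small p x : 0 < p -> in_lp (Finite p) x -> forall e, 0 < e -> forall n0, exists N, (n0 <= N)%nat /\ lp_norm p (tailv N x) < e.
Proof. intros Hp Hx e He n0. simpl in Hx. set (u := fun n => pw (Rabs (x n)) p) in *.
 destruct (ex_series_Reals_0 u Hx) as [l Hl].
 assert (Hs : Series u = l). { apply is_series_unique. apply is_series_Reals. exact Hl. }
 assert (Hpe : 0 < pw e p) by (apply pw_gt0; auto).
 destruct (Hl _ Hpe) as [N0 HN0].
 exists (S (n0 + N0)). split. lia.
 unfold lp_norm.
 assert (E : Series (fun n => pw (Rabs (tailv (S (n0 + N0)) x n)) p) = Series (fun k => u (S (n0 + N0) + k)%nat)).
 { rewrite (Series_incr_n_aux _ (S (n0+N0))). apply Series_ext. intros k. unfold tailv, u.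
   replace (Nat.ltb (S (n0 + N0) + k) (S (n0 + N0))) with false. auto. symmetry; apply Nat.ltb_ge; lia.
   intros k Hk. unfold tailv. replace (Nat.ltb k (S (n0 + N0))) with true. rewrite Rabs_R0; apply pw_0.
   symmetry; apply Nat.ltb_lt; lia. }
 rewrite E.
 assert (E2 := Series_incr_n u (S (n0 + N0)) ltac:(lia) Hx). simpl Init.Nat.pred in E2.
 assert (Hnn : 0 <= Series (fun k => u (S (n0 + N0) + k)%nat)).
 { apply Series_nonneg. apply (ex_series_incr_n u (S (n0+N0))); auto. intros; apply pw_ge0. }
 assert (Hlt : Series (fun k => u (S (n0 + N0) + k)%nat) < pw e p).
 { specialize (HN0 (n0 + N0)%nat ltac:(lia)). unfold R_dist in HN0. apply Rabs_def2 in HN0. lra. }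
 apply Rlt_le_trans with (pw (pw e p) (1 / p)). 2: right; apply pw_inv_pw; lra.
 apply pw_lt. apply Rdiv_lt_0_compat; lra. lra. Qed.

Lemma coord_le_norm q y n : 0 < q -> in_lp (Finite q) y -> Rabs (y n) <= lp_norm q y.
Proof. intros Hq Hy. simpl in Hy. unfold lp_norm.
 rewrite <- (pw_inv_pw (Rabs (y n)) q) by (auto using Rabs_pos; lra).
 apply pw_le. apply Rdiv_lt_0_compat; lra. split. apply pw_ge0.
 replace (pw (Rabs (y n)) q) with (sumto (S n) (fun k => if Nat.eqb k n then pw (Rabs (y k)) q else 0)).
 eapply Rle_trans. 2: apply (sumto_le_Series _ (S n) Hy). apply sumto_le. intros k _.
 destruct (Nat.eqb k n). lra. apply pw_ge0. intros; apply pw_ge0.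
 rewrite (sumto_single _ _ n). rewrite Nat.eqb_refl; auto. intros k _ Hk. apply Nat.eqb_neq in Hk; rewrite Hk; auto. lia. Qed.

Lemma T_zero p q T n : bounded_linear_op p q T -> T (fun _ => 0) n = 0.
Proof. intros [Hmap [Hadd [Hscal _]]].
 assert (Z : in_lp (Finite p) (fun _ => 0)) by (apply (in_lp_fin _ _ 0); auto).
 pose proof (Hscal 0 (fun _ => 0) Z n) as H.
 cbv beta in H. replace (fun _ : nat => 0 * 0) with (fun _ : nat => 0) in H by (extensionality k; ring). lra. Qed.

Lemma T_trunc p q T x n N : bounded_linear_op p q T -> 
  T (truncv N x) n = sumto N (fun j => x j * T (unitv j) n).
Proof. intros BL. pose proof BL as [Hmap [Hadd [Hscal _]]]. induction N.
 - simpl. rewrite <- (T_zero p q T n BL). reflexivity.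
 - assert (E : truncv (S N) x = fun k => truncv N x k + (fun k => x N * unitv N k) k).
   { extensionality k. unfold truncv, unitv.
     destruct (Nat.ltb_spec k (S N)); destruct (Nat.ltb_spec k N); destruct (Nat.eqb_spec k N); subst; try ring; lia. }
   rewrite E. rewrite Hadd. rewrite IHN. simpl. f_equal.
   apply (Hscal (x N) (unitv N)).
   apply (in_lp_fin _ _ (S N)). intros k Hk; unfold unitv. replace (Nat.eqb k N) with false. auto. symmetry; apply Nat.eqb_neq; lia.
   apply (in_lp_fin _ _ N). intros k Hk; unfold truncv. replace (Nat.ltb k N) with false. auto. symmetry; apply Nat.ltb_ge; lia.
   apply (in_lp_fin _ _ (S N)). intros k Hk; unfold unitv. replace (Nat.eqb k N) with false. ring. symmetry; apply Nat.eqb_neq; lia.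
Qed.

Lemma T_split p q T x n N : bounded_linear_op p q T -> in_lp (Finite p) x ->
  T x n = T (truncv N x) n + T (tailv N x) n.
Proof. intros BL Hx. pose proof BL as [Hmap [Hadd [Hscal _]]].
 rewrite <- Hadd. f_equal. extensionality k. unfold truncv, tailv. destruct (Nat.ltb k N); ring.
 apply (in_lp_dom _ x); auto. intros k; unfold truncv; destruct (Nat.ltb k N); auto.
 apply (in_lp_dom _ x); auto. intros k; unfold tailv; destruct (Nat.ltb k N); auto. Qed.

Lemma unitv_lp p j : in_lp (Finite p) (unitv j).
Proof. apply (in_lp_fin _ _ (S j)). intros k Hk; unfold unitv. replace (Nat.eqb k j) with false. auto. symmetry; apply Nat.eqb_neq; lia. Qed.

Lemma PaPb p q T (h : nat -> R) (s : Rbar) : 1 <= p -> 1 < q -> bounded_linear_op p q T ->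
  ((exists g, in_lp s g /\ forall x, in_lp (Finite p) x -> forall n, T x n = g n * cesaro (fun k => h k * x k) n) <->
   (exists g, in_lp s g /\ forall i j, T (unitv j) i = (if Nat.leb j i then g i * h j / INR (S i) else 0))).
Proof. intros Hp Hq BL. split.
 - intros [g [Hg HT]]. exists g; split; auto. intros i j. rewrite HT by apply unitv_lp.
   unfold cesaro. destruct (Nat.leb j i) eqn:E.
   + apply Nat.leb_le in E. rewrite sumto_unit_r by lia. unfold Rdiv; ring.
   + apply Nat.leb_gt in E. rewrite sumto_unit_out by lia. unfold Rdiv; ring.
 - intros [g [Hg HT]]. exists g; split; auto. intros x Hx n.
   pose proof BL as [Hmap [Hadd [Hscal [M HM]]]].
   set (c := g n * cesaro (fun k => h k * x k) n).
   assert (Htr : forall N, (S n <= N)%nat -> T (truncv N x) n = c).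
   { intros N HN. rewrite (T_trunc p q T x n N BL). unfold c, cesaro.
     transitivity (sumto N (fun j => if Nat.leb j n then (g n / INR (S n)) * (h j * x j) else 0)).
     apply sumto_ext; intros j _. rewrite HT. destruct (Nat.leb j n); unfold Rdiv; ring.
     rewrite sumto_trunc. replace (Nat.min (S n) N) with (S n) by lia. rewrite sumto_scal.
     unfold Rdiv; ring. }
   destruct (Req_EM_T (T x n) c) as [|Hne]; auto. exfalso.
   set (d := Rabs (T x n - c)).
   assert (Hd : 0 < d) by (apply Rabs_pos_lt; lra).
   assert (Hbound : forall N, (S n <= N)%nat -> d <= M * lp_norm p (tailv N x)).
   { intros N HN. unfold d. rewrite (T_split p q T x n N BL Hx), Htr by auto.
     replace (c + T (tailv N x) n - c) with (T (tailv N x) n) by ring.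
     assert (Ht : in_lp (Finite p) (tailv N x)).
     { apply (in_lp_dom _ x); auto. intros k; unfold tailv; destruct (Nat.ltb k N); auto. }
     eapply Rle_trans. apply (coord_le_norm q). lra. apply Hmap; auto. apply HM; auto. }
   destruct (Rle_lt_dec M 0).
   + assert (0 <= lp_norm p (tailv (S n) x)) by (unfold lp_norm; apply pw_ge0).
     specialize (Hbound (S n) (le_n _)). nra.
   + destruct (tail_small p x ltac:(lra) Hx (d / M) ltac:(apply Rdiv_lt_0_compat; lra) (S n)) as [N [HN1 HN2]].
     specialize (Hbound N HN1).
     assert (M * lp_norm p (tailv N x) < M * (d / M)) by (apply Rmult_lt_compat_l; lra).
     replace (M * (d / M)) with d in H by (field; lra). lra.
Qed.

Definition Hs (h : nat -> R) (i : nat) := sumto (S i) (fun j => Rabs (h j)).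
Definition sgn (x : R) : R := if Rle_dec 0 x then 1 else -1.
Lemma sgn_mul x : sgn x * x = Rabs x.
Proof. unfold sgn. destruct (Rle_dec 0 x). rewrite Rabs_pos_eq; lra. rewrite Rabs_left; lra. Qed.
Lemma sgn_abs x : Rabs (sgn x) = 1.
Proof. unfold sgn. destruct (Rle_dec 0 x). apply Rabs_R1. rewrite Rabs_left; lra. Qed.
Lemma unitv_abs j k : Rabs (unitv j k) <= 1.
Proof. unfold unitv. destruct (Nat.eqb k j). rewrite Rabs_R1; lra. rewrite Rabs_R0; lra. Qed.
Lemma INR_S_pos i : 0 < INR (S i).
Proof. apply lt_0_INR; lia. Qed.

Definition RowBound (a : nat -> nat -> R) (h : nat -> R) (C : R) := forall i m (rho : nat -> R),
  (forall j, Rabs (rho j) <= 1) ->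
  sumto m (fun j => rho j * a i j) <= C / INR (S i) * Rabs (sumto (Nat.min (S i) m) (fun j => h j * rho j)).

Definition Form (a : nat -> nat -> R) (h g : nat -> R) := forall i j, a i j = if Nat.leb j i then g i * h j / INR (S i) else 0.

Lemma form_phi a h g i m rho : Form a h g ->
  sumto m (fun j => rho j * a i j) = g i / INR (S i) * sumto (Nat.min (S i) m) (fun j => h j * rho j).
Proof. intros F. rewrite <- sumto_scal, <- sumto_trunc. apply sumto_ext; intros j _. rewrite F.
 destruct (Nat.leb j i); unfold Rdiv; ring. Qed.

Fixpoint fnz (h : nat -> R) (i : nat) : option nat :=
  match i with
  | O => if Req_EM_T (h 0%nat) 0 then None else Some 0%nat
  | S k => if Req_EM_T (h (S k)) 0 then fnz h k else Some (S k)
  end.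

Lemma fnz_some h i j : fnz h i = Some j -> (j <= i)%nat /\ h j <> 0.
Proof. revert j; induction i; simpl; intros j.
 destruct (Req_EM_T (h 0%nat) 0). discriminate. intros E; inversion E; subst; split; auto.
 destruct (Req_EM_T (h (S i)) 0). intros E; destruct (IHi j E); split; auto.
 intros E; inversion E; subst; split; auto. Qed.

Lemma fnz_none h i : fnz h i = None -> forall j, (j <= i)%nat -> h j = 0.
Proof. induction i; simpl.
 destruct (Req_EM_T (h 0%nat) 0). intros _ j Hj. replace j with 0%nat by lia; auto. discriminate.
 destruct (Req_EM_T (h (S i)) 0). intros E j Hj. destruct (Nat.eq_dec j (S i)). subst; auto. apply IHi; auto; lia.
 discriminate. Qed.

Lemma kernel a h C : RowBound a h C -> exists g, Form a h g /\ (forall i, g i <> 0 -> 0 < Hs h i).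
Proof. intros RB.
 assert (K : forall i m rho, (forall j, Rabs (rho j) <= 1) -> sumto (Nat.min (S i) m) (fun j => h j * rho j) = 0 ->
              sumto m (fun j => rho j * a i j) <= 0).
 { intros i m rho H1 H2. eapply Rle_trans. apply RB; auto. rewrite H2, Rabs_R0. lra. }
 assert (K1 : forall i j c, (i < j)%nat -> Rabs c <= 1 -> c * a i j <= 0).
 { intros i j c Hij Hc. specialize (K i (S j) (fun k => c * unitv j k)). cbv beta in K.
   replace (sumto (S j) (fun k => c * unitv j k * a i k)) with (c * a i j) in K.
   apply K. intros k. rewrite Rabs_mult. pose proof (unitv_abs j k). pose proof (Rabs_pos c). pose proof (Rabs_pos (unitv j k)). nra.
   apply sumto_zero. intros k Hk. unfold unitv. replace (Nat.eqb k j) with false. ring. symmetry; apply Nat.eqb_neq; lia.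
   rewrite <- (sumto_unit_l (S j) j (fun k => c * a i k)) by lia. apply sumto_ext; intros; ring. }
 assert (K2 : forall i j j0 c1 c2, (j <= i)%nat -> (j0 <= i)%nat -> Rabs c1 + Rabs c2 <= 1 ->
              c1 * h j + c2 * h j0 = 0 -> c1 * a i j + c2 * a i j0 <= 0).
 { intros i j j0 c1 c2 Hj Hj0 Hc Hz. specialize (K i (S i) (fun k => c1 * unitv j k + c2 * unitv j0 k)). cbv beta in K.
   replace (sumto (S i) (fun k => (c1 * unitv j k + c2 * unitv j0 k) * a i k)) with (c1 * a i j + c2 * a i j0) in K.
   apply K.
   - intros k. eapply Rle_trans. apply Rabs_triang. rewrite !Rabs_mult.
     pose proof (unitv_abs j k). pose proof (unitv_abs j0 k). pose proof (Rabs_pos c1). pose proof (Rabs_pos c2).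
     pose proof (Rabs_pos (unitv j k)). pose proof (Rabs_pos (unitv j0 k)). nra.
   - replace (Nat.min (S i) (S i)) with (S i) by lia.
     transitivity (sumto (S i) (fun k => unitv j k * (c1 * h k)) + sumto (S i) (fun k => unitv j0 k * (c2 * h k))).
     rewrite <- sumto_plus. apply sumto_ext; intros; ring.
     rewrite !sumto_unit_l by lia. lra.
   - transitivity (sumto (S i) (fun k => unitv j k * (c1 * a i k)) + sumto (S i) (fun k => unitv j0 k * (c2 * a i k))).
     rewrite !sumto_unit_l by lia. ring. rewrite <- sumto_plus. apply sumto_ext; intros; ring. }
 exists (fun i => match fnz h i with Some j0 => INR (S i) * a i j0 / h j0 | None => 0 end). split.
 - intros i j. destruct (Nat.leb j i) eqn:E.
   + apply Nat.leb_le in E. destruct (fnz h i) as [j0|] eqn:F.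
     * destruct (fnz_some h i j0 F) as [Hj0 Hh0].
       set (B := Rabs (h j0) + Rabs (h j) + 1).
       assert (HB : 0 < B) by (unfold B; pose proof (Rabs_pos (h j0)); pose proof (Rabs_pos (h j)); lra).
       assert (Hc : Rabs (h j0 / B) + Rabs (- h j / B) <= 1).
       { unfold Rdiv. rewrite !Rabs_mult, Rabs_Ropp, (Rabs_pos_eq (/ B)) by (left; apply Rinv_0_lt_compat; auto).
         apply (Rmult_le_reg_r B); auto. rewrite Rmult_1_l. replace ((Rabs (h j0) * / B + Rabs (h j) * / B) * B) with (Rabs (h j0) + Rabs (h j)) by (field; lra).
         unfold B; lra. }
       assert (Hc' : Rabs (- (h j0 / B)) + Rabs (- (- h j / B)) <= 1) by (rewrite !Rabs_Ropp; auto).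
       pose proof (K2 i j j0 _ _ E Hj0 Hc ltac:(field; lra)).
       pose proof (K2 i j j0 _ _ E Hj0 Hc' ltac:(field; lra)).
       assert (Eq : h j0 * a i j = h j * a i j0).
       { assert (h j0 / B * a i j + - h j / B * a i j0 = 0) by lra.
         apply (Rmult_eq_reg_r (/ B)). 2: apply Rinv_neq_0_compat; lra. unfold Rdiv in H1. lra. }
       pose proof (INR_S_pos i).
       assert (Ea : a i j = h j * a i j0 / h j0). { apply (Rmult_eq_reg_l (h j0)); auto. rewrite Eq. field. auto. }
       rewrite Ea. field. split; lra.
     * pose proof (fnz_none h i F j E) as Hz.
       pose proof (K2 i j j 1 0 E E ltac:(rewrite Rabs_R1, Rabs_R0; lra) ltac:(rewrite Hz; ring)).
       pose proof (K2 i j j (-1) 0 E E ltac:(rewrite Rabs_R0, Rabs_left; lra) ltac:(rewrite Hz; ring)).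
       unfold Rdiv; rewrite Hz. lra.
   + apply Nat.leb_gt in E. pose proof (K1 i j 1 E ltac:(rewrite Rabs_R1; lra)).
     pose proof (K1 i j (-1) E ltac:(rewrite Rabs_left; lra)). lra.
 - intros i. destruct (fnz h i) as [j0|] eqn:F. 2: lra. intros _.
   destruct (fnz_some h i j0 F) as [Hj0 Hh0]. unfold Hs.
   eapply Rlt_le_trans. 2: apply (sumto_term _ _ j0). apply Rabs_pos_lt; auto. intros; apply Rabs_pos. lia.
Qed.

Lemma bound a h g C : 0 < C -> Form a h g -> RowBound a h C -> (forall i, g i <> 0 -> 0 < Hs h i) -> forall i, Rabs (g i) <= C.
Proof. intros HC F RB Hpos i. destruct (Req_EM_T (g i) 0) as [E|E]. rewrite E, Rabs_R0; lra.
 specialize (Hpos i E). specialize (RB i (S i) (fun j => sgn (g i) * sgn (h j))).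
 rewrite (form_phi a h g) in RB by auto. replace (Nat.min (S i) (S i)) with (S i) in RB by lia.
 replace (sumto (S i) (fun j => h j * (sgn (g i) * sgn (h j)))) with (sgn (g i) * Hs h i) in RB.
 2: { unfold Hs. rewrite <- sumto_scal. apply sumto_ext; intros. rewrite <- sgn_mul. ring. }
 rewrite Rabs_mult, sgn_abs, (Rabs_pos_eq (Hs h i)) in RB by lra.
 assert (RB' : Rabs (g i) * (Hs h i / INR (S i)) <= C * (Hs h i / INR (S i))).
 { rewrite <- sgn_mul. unfold Rdiv in *. replace (sgn (g i) * g i * (Hs h i * / INR (S i))) with (g i * / INR (S i) * (sgn (g i) * Hs h i)) by ring.
   eapply Rle_trans. apply RB. intros j. rewrite Rabs_mult, !sgn_abs; lra. right; ring. }
 apply Rmult_le_reg_r in RB'; auto. apply Rdiv_lt_0_compat; auto. apply INR_S_pos. Qed.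

Definition PcP (a : nat -> nat -> R) (h : nat -> R) (sp : R) := exists C, 0 < C /\
  forall (n m : nat) (rr : nat -> nat -> R), (forall i j, Rabs (rr i j) <= 1) ->
    sumto n (fun i => sumto m (fun j => rr i j * a i j))
    <= C * pw (sumto n (fun i => / pw (INR (S i)) sp *
              pw (Rabs (sumto (Nat.min (S i) m) (fun j => h j * rr i j))) sp)) (1 / sp).

Lemma Pc_rowbound a h sp C : 0 < sp -> 0 < C ->
  (forall (n m : nat) (rr : nat -> nat -> R), (forall i j, Rabs (rr i j) <= 1) ->
    sumto n (fun i => sumto m (fun j => rr i j * a i j))
    <= C * pw (sumto n (fun i => / pw (INR (S i)) sp *
              pw (Rabs (sumto (Nat.min (S i) m) (fun j => h j * rr i j))) sp)) (1 / sp)) ->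
  RowBound a h C.
Proof. intros Hsp HC Hc i m rho Hrho.
 specialize (Hc (S i) m (fun i' j => if Nat.eqb i' i then rho j else 0)). cbv beta in Hc.
 rewrite (sumto_single _ _ i) in Hc. rewrite (sumto_single (S i) _ i) in Hc.
 rewrite Nat.eqb_refl in Hc.
 rewrite pw_div, pw_inv_pw in Hc. 
 - replace (C / INR (S i) * Rabs (sumto (Nat.min (S i) m) (fun j => h j * rho j))) with
     (C * (Rabs (sumto (Nat.min (S i) m) (fun j => h j * rho j)) / INR (S i))) by (field; pose proof (INR_S_pos i); lra).
   apply Hc. intros i' j. destruct (Nat.eqb i' i); auto. rewrite Rabs_R0; lra.
 - unfold Rdiv; apply Rmult_le_pos. apply Rabs_pos. left; apply Rinv_0_lt_compat, INR_S_pos.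
 - lra.
 - apply INR_S_pos.
 - apply Rabs_pos.
 - intros k _ Hk. apply Nat.eqb_neq in Hk. rewrite Hk. rewrite sumto_zero. rewrite Rabs_R0, pw_0; ring. intros; ring.
 - lia.
 - intros k _ Hk. apply Nat.eqb_neq in Hk. rewrite Hk. apply sumto_zero. intros; ring.
 - lia.
Qed.

Lemma abs_helper g X S B : 0 < S -> Rabs g <= B -> g / S * X <= B * (Rabs X / S).
Proof. intros HS Hg. eapply Rle_trans. apply Rle_abs. unfold Rdiv. rewrite !Rabs_mult, Rabs_inv, (Rabs_pos_eq S) by lra.
 pose proof (Rabs_pos X). pose proof (Rinv_0_lt_compat S HS).
 replace (B * (Rabs X * / S)) with (B * / S * Rabs X) by ring. apply Rmult_le_compat_r; auto. apply Rmult_le_compat_r; lra. Qed.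

Lemma Pc_lhs a h g n m rr : Form a h g ->
  sumto n (fun i => sumto m (fun j => rr i j * a i j)) =
  sumto n (fun i => g i / INR (S i) * sumto (Nat.min (S i) m) (fun j => h j * rr i j)).
Proof. intros F. apply sumto_ext; intros i _. apply form_phi; auto. Qed.

Lemma Pb_Pc_inf a h g B : Form a h g -> (forall i, Rabs (g i) <= B) -> PcP a h 1.
Proof. intros F HB. assert (B0 : 0 <= B) by (pose proof (HB 0%nat); pose proof (Rabs_pos (g 0%nat)); lra).
 exists (B + 1). split. lra. intros n m rr Hrr. rewrite (Pc_lhs a h g) by auto.
 replace (1 / 1) with 1 by field. rewrite pw_1.
 2: { apply sumto_nonneg; intros. apply Rmult_le_pos. left; apply Rinv_0_lt_compat, pw_gt0, INR_S_pos. apply pw_ge0. }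
 set (X := fun i => sumto (Nat.min (S i) m) (fun j => h j * rr i j)).
 change (fun i => / pw (INR (S i)) 1 * pw (Rabs (sumto (Nat.min (S i) m) (fun j => h j * rr i j))) 1) with (fun i => / pw (INR (S i)) 1 * pw (Rabs (X i)) 1).
 change (fun i => g i / INR (S i) * sumto (Nat.min (S i) m) (fun j => h j * rr i j)) with (fun i => g i / INR (S i) * X i).
 replace (sumto n (fun i => / pw (INR (S i)) 1 * pw (Rabs (X i)) 1)) with (sumto n (fun i => Rabs (X i) / INR (S i))).
 2: { apply sumto_ext; intros. rewrite !pw_1; try (unfold Rdiv; ring); try apply Rabs_pos; try (left; apply INR_S_pos). }
 assert (0 <= sumto n (fun i => Rabs (X i) / INR (S i))).
 { apply sumto_nonneg; intros. unfold Rdiv; apply Rmult_le_pos. apply Rabs_pos. left; apply Rinv_0_lt_compat, INR_S_pos. }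
 apply Rle_trans with (B * sumto n (fun i => Rabs (X i) / INR (S i))). 2: nra.
 rewrite <- sumto_scal. apply sumto_le; intros i _. apply abs_helper. apply INR_S_pos. auto. Qed.

Lemma Pb_Pc_fin a h g s : 1 < s -> Form a h g -> ex_series (fun n => pw (Rabs (g n)) s) -> PcP a h (s / (s - 1)).
Proof. intros Hs F Hg. set (sp := s / (s - 1)).
 assert (Hsp : 0 < sp) by (unfold sp; apply Rdiv_lt_0_compat; lra).
 assert (Hab : 1 / s + 1 / sp = 1) by (unfold sp; field; lra).
 set (G := Series (fun n => pw (Rabs (g n)) s)).
 exists (pw G (1 / s) + 1). split. pose proof (pw_ge0 G (1/s)); lra.
 intros n m rr Hrr. rewrite (Pc_lhs a h g) by auto.
 set (X := fun i => sumto (Nat.min (S i) m) (fun j => h j * rr i j)).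
 change (fun i => / pw (INR (S i)) sp * pw (Rabs (sumto (Nat.min (S i) m) (fun j => h j * rr i j))) sp) with (fun i => / pw (INR (S i)) sp * pw (Rabs (X i)) sp).
 change (fun i => g i / INR (S i) * sumto (Nat.min (S i) m) (fun j => h j * rr i j)) with (fun i => g i / INR (S i) * X i).
 replace (sumto n (fun i => / pw (INR (S i)) sp * pw (Rabs (X i)) sp)) with (sumto n (fun i => pw (Rabs (X i) / INR (S i)) sp)).
 2: { apply sumto_ext; intros. rewrite pw_div; auto. apply INR_S_pos. apply Rabs_pos. }
 set (W := pw (sumto n (fun i => pw (Rabs (X i) / INR (S i)) sp)) (1 / sp)).
 assert (W0 : 0 <= W) by apply pw_ge0.
 apply Rle_trans with (sumto n (fun i => Rabs (g i) * (Rabs (X i) / INR (S i)))).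
 { apply sumto_le; intros i _. apply abs_helper. apply INR_S_pos. lra. }
 assert (Hnn : forall i, 0 <= Rabs (X i) / INR (S i)).
 { intros; unfold Rdiv; apply Rmult_le_pos. apply Rabs_pos. left; apply Rinv_0_lt_compat, INR_S_pos. }
 replace (sumto n (fun i => Rabs (g i) * (Rabs (X i) / INR (S i)))) with
   (sumto n (fun i => pw (pw (Rabs (g i)) s) (1 / s) * pw (pw (Rabs (X i) / INR (S i)) sp) (1 / sp))).
 2: { apply sumto_ext; intros. rewrite !pw_inv_pw; auto; try lra. apply Rabs_pos. }
 eapply Rle_trans. apply holder. apply Rdiv_lt_0_compat; lra. apply Rdiv_lt_0_compat; lra. auto.
 intros; apply pw_ge0. intros; apply pw_ge0.
 fold W. apply Rmult_le_compat_r; auto.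
 assert (pw (sumto n (fun k => pw (Rabs (g k)) s)) (1 / s) <= pw G (1 / s)).
 { apply pw_le. apply Rdiv_lt_0_compat; lra. split. apply sumto_nonneg; intros; apply pw_ge0.
   apply sumto_le_Series; auto. intros; apply pw_ge0. }
 lra. Qed.

Lemma pw_succ x s : 0 <= x -> x * pw x (s - 1) = pw x s.
Proof. intros. replace s with (1 + (s - 1)) at 2 by ring. rewrite pw_plus, pw_1; auto. Qed.

Lemma Pc_Pb_fin a h g s : 1 < s -> Form a h g -> (forall i, g i <> 0 -> 0 < Hs h i) ->
  PcP a h (s / (s - 1)) -> ex_series (fun n => pw (Rabs (g n)) s).
Proof. intros Hs1 F Hpos [C [HC Hc]]. set (sp := s / (s - 1)) in *.
 assert (Hsp : 0 < sp) by (unfold sp; apply Rdiv_lt_0_compat; lra).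
 assert (Hab : 1 / s + 1 / sp = 1) by (unfold sp; field; lra).
 assert (Hssp : (s - 1) * sp = s) by (unfold sp; field; lra).
 apply (ex_series_bounded _ (pw C s)). intros; apply pw_ge0. intros N.
 set (SN := sumto N (fun i => pw (Rabs (g i)) s)).
 set (w := fun i => Hs h i / INR (S i)).
 set (v := fun i => sgn (g i) * pw (Rabs (g i)) (s - 1)).
 set (K := 1 + sumto N (fun i => if Req_EM_T (g i) 0 then 0 else Rabs (v i) / w i)).
 assert (Hw : forall i, g i <> 0 -> 0 < w i) by (intros; unfold w; apply Rdiv_lt_0_compat; auto; apply INR_S_pos).
 assert (Hterm : forall i, 0 <= (if Req_EM_T (g i) 0 then 0 else Rabs (v i) / w i)).
 { intros i. destruct (Req_EM_T (g i) 0). lra. unfold Rdiv; apply Rmult_le_pos. apply Rabs_pos. left; apply Rinv_0_lt_compat; auto. }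
 assert (HK : 1 <= K) by (unfold K; pose proof (sumto_nonneg N _ (fun k _ => Hterm k)); lra).
 set (t := / K).
 assert (Ht : 0 < t) by (unfold t; apply Rinv_0_lt_compat; lra).
 set (c := fun i => if Nat.ltb i N then (if Req_EM_T (g i) 0 then 0 else t * v i / w i) else 0).
 specialize (Hc N N (fun i j => c i * sgn (h j))). cbv beta in Hc.
 rewrite (Pc_lhs a h g) in Hc by auto.
 assert (HX : forall i, (i < N)%nat -> sumto (Nat.min (S i) N) (fun j => h j * (c i * sgn (h j))) = c i * Hs h i).
 { intros i Hi. replace (Nat.min (S i) N) with (S i) by lia. unfold Hs. rewrite <- sumto_scal.
   apply sumto_ext; intros. rewrite <- (sgn_mul (h k)). ring. }
 rewrite (sumto_ext N _ (fun i => t * pw (Rabs (g i)) s)) in Hc.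
 2: { intros i Hi. rewrite HX by auto. unfold c. replace (Nat.ltb i N) with true by (symmetry; apply Nat.ltb_lt; auto).
      destruct (Req_EM_T (g i) 0) as [E|E]. rewrite E, Rabs_R0, pw_0; unfold Rdiv; ring.
      pose proof (Hw i E). pose proof (Hpos i E). pose proof (INR_S_pos i).
      rewrite <- pw_succ by apply Rabs_pos. unfold v, w. set (P := pw (Rabs (g i)) (s - 1)). rewrite <- (sgn_mul (g i)). field. split; lra. }
 rewrite (sumto_ext N (fun i => / pw (INR (S i)) sp * pw (Rabs (sumto (Nat.min (S i) N) (fun j => h j * (c i * sgn (h j))))) sp) (fun i => pw t sp * pw (Rabs (g i)) s)) in Hc.
 2: { intros i Hi. rewrite HX by auto. rewrite pw_div. 2: apply INR_S_pos. 2: apply Rabs_pos.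
      unfold c. replace (Nat.ltb i N) with true by (symmetry; apply Nat.ltb_lt; auto).
      destruct (Req_EM_T (g i) 0) as [E|E]. rewrite E, Rabs_R0, !Rmult_0_l, Rabs_R0. unfold Rdiv; rewrite Rmult_0_l, !pw_0; ring.
      pose proof (Hw i E). pose proof (Hpos i E). pose proof (INR_S_pos i).
      replace (Rabs (t * v i / w i * Hs h i) / INR (S i)) with (t * pw (Rabs (g i)) (s - 1)).
      rewrite pw_mul by (try lra; apply pw_ge0). rewrite pw_pw by apply Rabs_pos. rewrite Hssp. reflexivity.
      replace (t * v i / w i * Hs h i) with (t * INR (S i) * v i) by (unfold w; field; split; lra).
      rewrite !Rabs_mult. unfold v. rewrite Rabs_mult, sgn_abs, (Rabs_pos_eq t), (Rabs_pos_eq (INR (S i))), (Rabs_pos_eq (pw _ _)) by (try lra; apply pw_ge0).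
      field; lra. }
 rewrite !sumto_scal in Hc. fold SN in Hc.
 rewrite pw_mul in Hc by (try apply pw_ge0; apply sumto_nonneg; intros; apply pw_ge0).
 rewrite pw_inv_pw in Hc by lra.
 assert (Hfin : SN <= C * pw SN (1 / sp)).
 { apply (Rmult_le_reg_l t); auto. eapply Rle_trans. apply Hc.
   - intros i j. unfold c. rewrite Rabs_mult, sgn_abs, Rmult_1_r.
     destruct (Nat.ltb i N) eqn:Ei. 2: rewrite Rabs_R0; lra. destruct (Req_EM_T (g i) 0) as [E|E]. rewrite Rabs_R0; lra.
     apply Nat.ltb_lt in Ei. pose proof (Hw i E).
     assert (Hle : Rabs (v i) / w i <= K).
     { unfold K. pose proof (sumto_term N _ i (fun k _ => Hterm k) Ei) as H1. cbv beta in H1.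
       assert (T1 : (if Req_EM_T (g i) 0 then 0 else Rabs (v i) / w i) = Rabs (v i) / w i) by (destruct (Req_EM_T (g i) 0); [contradiction|reflexivity]).
       rewrite T1 in H1. lra. }
     unfold Rdiv in *. rewrite !Rabs_mult, (Rabs_pos_eq t), Rabs_inv, (Rabs_pos_eq (w i)) by lra.
     unfold t. apply (Rmult_le_reg_l K). lra. rewrite Rmult_1_r. field_simplify. lra. lra.
   - right; ring. }
 assert (HSN : 0 <= SN) by (apply sumto_nonneg; intros; apply pw_ge0).
 destruct (Req_EM_T SN 0) as [E|E]. rewrite E; apply pw_ge0.
 assert (HP : 0 < pw SN (1 / sp)) by (apply pw_gt0; lra).
 assert (Hs' : pw SN (1 / s) <= C).
 { apply (Rmult_le_reg_r (pw SN (1 / sp))); auto. rewrite <- pw_plus, Hab, pw_1; auto. }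
 rewrite <- (pw_inv_pw SN s) by lra. rewrite pw_pw by lra.
 replace (s * (1 / s)) with 1 by (field; lra). rewrite pw_1 by auto.
 replace SN with (pw (pw SN (1 / s)) s) at 1. apply pw_le. lra. split; auto; apply pw_ge0.
 rewrite pw_pw by auto. replace (1 / s * s) with 1 by (field; lra). apply pw_1; auto. Qed.

Lemma Pb_Pd a h g M : Form a h g -> (forall i, Rabs (g i) <= M) ->
  exists C, 0 < C /\ forall (n m : nat) (rr : nat -> R), (forall j, Rabs (rr j) <= 1) ->
    sumto m (fun j => rr j * a n j) <= C * (1 / INR (S n)) * Rabs (sumto (Nat.min (S n) m) (fun j => h j * rr j)).
Proof. intros F HM. assert (M0 : 0 <= M) by (pose proof (HM 0%nat); pose proof (Rabs_pos (g 0%nat)); lra).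
 exists (M + 1). split. lra. intros n m rr Hrr. rewrite (form_phi a h g) by auto.
 eapply Rle_trans. apply abs_helper. apply INR_S_pos. apply HM.
 pose proof (INR_S_pos n). pose proof (Rabs_pos (sumto (Nat.min (S n) m) (fun j => h j * rr j))).
 assert (0 <= Rabs (sumto (Nat.min (S n) m) (fun j => h j * rr j)) / INR (S n)) by (apply Rdiv_le_0_compat; lra).
 replace ((M + 1) * (1 / INR (S n)) * Rabs (sumto (Nat.min (S n) m) (fun j => h j * rr j))) with
   ((M + 1) * (Rabs (sumto (Nat.min (S n) m) (fun j => h j * rr j)) / INR (S n))) by (field; lra). nra. Qed.

Theorem proposition5p3 (p q r : R) (T : (nat -> R) -> (nat -> R)) (h : nat -> R) :
  1 <= p -> 1 < q -> 1 < r ->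
  bounded_linear_op p q T -> nontrivial_op p T ->
  in_lp (s_exp p r) h ->
  let a := fun i j => T (unitv j) i in
  let s := s_exp r q in
  let s' := conj_exp s in
  let Pa := exists g, in_lp s g /\
              forall x, in_lp (Finite p) x ->
                forall n, T x n = g n * cesaro (fun k => h k * x k) n in
  let Pb := exists g, in_lp s g /\
              forall i j, a i j = (if Nat.leb j i then g i * h j / INR (S i) else 0) in
  let Pc := exists C, 0 < C /\
              forall (n m : nat) (rr : nat -> nat -> R),
                (forall i j, Rabs (rr i j) <= 1) ->
                sumto n (fun i => sumto m (fun j => rr i j * a i j))
                <= C * pw (sumto n (fun i =>
                         / pw (INR (S i)) s' *
                         pw (Rabs (sumto (Nat.min (S i) m) (fun j => h j * rr i j))) s'))
                        (1 / s') in
  let Pd := exists C, 0 < C /\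
              forall (n m : nat) (rr : nat -> R),
                (forall j, Rabs (rr j) <= 1) ->
                sumto m (fun j => rr j * a n j)
                <= C * (1 / INR (S n)) * Rabs (sumto (Nat.min (S n) m) (fun j => h j * rr j)) in
  (Pa <-> Pb) /\ (Pb <-> Pc) /\ (r <= q -> (Pc <-> Pd)).
Proof.
 intros Hp Hq Hr BL NT Hh a s s' Pa Pb Pc Pd.
 assert (AB : Pa <-> Pb) by (apply (PaPb p q T h s); auto).
 assert (Hinf : s = p_infty -> (Pb <-> Pc) /\ (Pb <-> Pd)).
 { intros Es. assert (Es' : s' = 1) by (unfold s'; rewrite Es; reflexivity).
   unfold Pb, Pc, Pd. rewrite Es' in *. rewrite Es. simpl in_lp. split; split.
   - intros [g [[M HM] F]]. apply (Pb_Pc_inf a h g M F HM).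
   - intros [C [HC Hc]]. pose proof (Pc_rowbound a h 1 C ltac:(lra) HC Hc) as RB.
     destruct (kernel a h C RB) as [g [F Hpos]]. exists g. split; auto. exists C. apply (bound a h g C); auto.
   - intros [g [[M HM] F]]. apply (Pb_Pd a h g M F HM).
   - intros [C [HC Hc]].
     assert (RB : RowBound a h C).
     { intros i m rho Hrho. eapply Rle_trans. apply Hc; auto. right; unfold Rdiv; ring. }
     destruct (kernel a h C RB) as [g [F Hpos]]. exists g. split; auto. exists C. apply (bound a h g C); auto. }
 split; [exact AB|]. split.
 - unfold s, s_exp in *. destruct (Rlt_dec q r) as [Hqr|Hqr].
   + set (sv := r * q / (r - q)) in *.
     assert (Hsv : 1 < sv).
     { unfold sv. apply (Rmult_lt_reg_r (r - q)). lra. unfold Rdiv. rewrite Rmult_assoc, Rinv_l by lra. nra. }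
     unfold Pb, Pc, s'. simpl conj_exp. simpl in_lp. split.
     * intros [g [Hg F]]. apply (Pb_Pc_fin a h g sv); auto.
     * intros [C [HC Hc]].
       pose proof (Pc_rowbound a h (sv / (sv - 1)) C ltac:(apply Rdiv_lt_0_compat; lra) HC Hc) as RB.
       destruct (kernel a h C RB) as [g [F Hpos]]. exists g. split; auto.
       apply (Pc_Pb_fin a h g sv); auto. exists C; split; auto.
   + apply Hinf; auto.
 - intros Hrq. assert (Es : s = p_infty).
   { unfold s, s_exp. destruct (Rlt_dec q r); auto. lra. }
   destruct (Hinf Es) as [H1 H2]. unfold s in Es.
   assert (BC : Pb <-> Pc).
   { unfold s, s_exp in *. destruct (Rlt_dec q r). lra. apply Hinf; auto. }
   tauto.
Qed.
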